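(* Let $\vartheta\in\{p,bp,r\}$. Neither of the spaces $\mathcal{H}_{\vartheta}$ and $\mathcal{L}_u$ is contained in the other; that is, $\mathcal{H}_{\vartheta}\setminus\mathcal{L}_u\neq\emptyset$ and $\mathcal{L}_u\setminus\mathcal{H}_{\vartheta}\neq\emptyset$.
   Context: $\Omega$ denotes the set of all complex double sequences $x=(x_{kl})_{k,l\ge 1}$. A double sequence is $p$-convergent (Pringsheim convergent) to $L$ if for every $\varepsilon>0$ there is $N$ with $|x_{kl}-L|<\varepsilon$ for all $k,l\ge N$; $bp$-convergent if bounded and $p$-convergent; $r$-convergent (regularly convergent) if $p$-convergent and every row and every column converges. For $\vartheta\in\{p,bp,r\}$, $\mathcal{C}_{\vartheta 0}$ is the set of double sequences $\vartheta$-convergent to $0$. $\Delta x_{kl}=x_{kl}-x_{k+1,l}-x_{k,l+1}+x_{k+1,l+1}$, and $\mathcal{H}_{\vartheta}=\{x\in\Omega:\sum_{k,l=1}^{\infty}|kl\,\Delta x_{kl}|<\infty\}\cap\mathcal{C}_{\vartheta 0}$. $\mathcal{L}_u=\{x\in\Omega:\sum_{k,l=1}^{\infty}|x_{kl}|<\infty\}$ is the space of absolutely summable double sequences. *)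

(* Defs.v *)
From Stdlib Require Import Reals.
From Coquelicot Require Import Coquelicot.
Open Scope R_scope.

(* A complex double sequence x = (x_{kl})_{k,l>=1} is represented by
   x : nat -> nat -> C with  x k l  standing for x_{k+1,l+1}
   (index shift so that Rocq indices start at 0). *)
Definition dseq := nat -> nat -> C.

Definition p_conv (x : dseq) (L : C) : Prop :=
  forall eps : R, 0 < eps -> exists N : nat,
    forall k l : nat, (N <= k)%nat -> (N <= l)%nat -> Cmod (x k l - L) < eps.

Definition dbounded (x : dseq) : Prop :=
  exists M : R, forall k l : nat, Cmod (x k l) <= M.

Definition seq_conv (u : nat -> C) : Prop :=
  exists L : C, forall eps : R, 0 < eps -> exists N : nat,
    forall n : nat, (N <= n)%nat -> Cmod (u n - L) < eps.

Inductive mode := mode_p | mode_bp | mode_r.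

Definition C0 (th : mode) (x : dseq) : Prop :=
  match th with
  | mode_p => p_conv x 0
  | mode_bp => dbounded x /\ p_conv x 0
  | mode_r => p_conv x 0 /\ (forall k, seq_conv (fun l => x k l))
                         /\ (forall l, seq_conv (fun k => x k l))
  end.

(* sum_{k,l>=1} a_{kl} < infinity for nonnegative a: bounded rectangular partial sums.
   (sum_n a n = a 0 + ... + a n) *)
Definition dsum_finite (a : nat -> nat -> R) : Prop :=
  exists M : R, forall m n : nat,
    sum_n (fun k => sum_n (fun l => a k l) n) m <= M.

Definition Delta (x : dseq) (k l : nat) : C :=
  x k l - x (S k) l - x k (S l) + x (S k) (S l).

(* H_theta; the weight k*l in original indexing is (k+1)*(l+1) after the shift *)
Definition H_space (th : mode) (x : dseq) : Prop :=
  dsum_finite (fun k l => Cmod (RtoC (INR ((S k) * (S l))) * Delta x k l))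
  /\ C0 th x.

Definition L_u (x : dseq) : Prop :=
  dsum_finite (fun k l => Cmod (x k l)).

(* Main.v *)
Require Import Defs.
From Stdlib Require Import Reals Lra Lia ZArith.
From Coquelicot Require Import Coquelicot.
Open Scope R_scope.

Lemma Delta_R (a : nat -> nat -> R) k l :
  Defs.Delta (fun k l => RtoC (a k l)) k l =
  RtoC (a k l - a (S k) l - a k (S l) + a (S k) (S l)).
Proof.
  unfold Defs.Delta. rewrite <- !RtoC_minus, <- RtoC_plus. reflexivity.
Qed.

Lemma term_R (a : nat -> nat -> R) k l :
  Cmod (RtoC (INR ((S k) * (S l))) * Defs.Delta (fun k l => RtoC (a k l)) k l) =
  Rabs (INR ((S k) * (S l)) * (a k l - a (S k) l - a k (S l) + a (S k) (S l))).
Proof. rewrite Delta_R, <- RtoC_mult, Cmod_R. reflexivity. Qed.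

Lemma sumf_le_term (f : nat -> R) n k :
  (forall i, 0 <= f i) -> (k <= n)%nat -> f k <= sum_f_R0 f n.
Proof.
  intros Hf Hk. induction n as [|n IH].
  - assert (k = 0)%nat by lia. subst. simpl. lra.
  - simpl. destruct (Nat.eq_dec k (S n)) as [->|Hne].
    + assert (0 <= sum_f_R0 f n) by (apply cond_pos_sum; auto). lra.
    + assert (f k <= sum_f_R0 f n) by (apply IH; lia). specialize (Hf (S n)). lra.
Qed.

Lemma sumf_nonneg (f : nat -> R) n : (forall i, 0 <= f i) -> 0 <= sum_f_R0 f n.
Proof. intros; apply cond_pos_sum; auto. Qed.

Lemma big_nat (M : R) : exists N : nat, M < INR N.
Proof.
  destruct (archimed (Rabs M)) as [H1 _].
  exists (Z.to_nat (up (Rabs M))).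
  assert (0 <= Rabs M) by apply Rabs_pos.
  assert (0 < up (Rabs M))%Z by (apply lt_IZR; lra).
  rewrite INR_IZR_INZ, Z2Nat.id by lia.
  pose proof (RRle_abs M). lra.
Qed.

Lemma small_inv (eps : R) : 0 < eps -> exists N : nat, forall k, (N <= k)%nat -> / INR (S k) < eps.
Proof.
  intros He. destruct (big_nat (/ eps)) as [N HN]. exists N. intros k Hk.
  assert (INR N <= INR k) by (apply le_INR; lia).
  rewrite S_INR.
  assert (0 < / eps) by (apply Rinv_0_lt_compat; lra).
  rewrite <- (Rinv_inv eps).
  apply Rinv_lt_contravar; [apply Rmult_lt_0_compat; lra | lra].
Qed.

Lemma Cm0 (a : C) : (a - 0)%C = a. Proof. ring. Qed.
Lemma Cmm (a : C) : (a - a)%C = RtoC 0. Proof. ring. Qed.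

Definition x1 : dseq := fun k l => RtoC (/ INR (S k)).

Lemma x1_pconv : p_conv x1 0.
Proof.
  intros eps He. destruct (small_inv eps He) as [N HN]. exists N. intros k l Hk _.
  unfold x1. rewrite Cm0, Cmod_R, Rabs_pos_eq.
  - now apply HN.
  - left. apply Rinv_0_lt_compat, lt_0_INR; lia.
Qed.


Lemma x1_term k l : Cmod (RtoC (INR ((S k) * (S l))) * Defs.Delta x1 k l) = 0.
Proof.
  unfold x1. rewrite (term_R (fun k l => / INR (S k))).
  replace (/ INR (S k) - / INR (S (S k)) - / INR (S k) + / INR (S (S k))) with 0 by ring.
  rewrite Rmult_0_r. apply Rabs_R0.
Qed.

Lemma sum_zero n : sum_n (fun _ : nat => 0) n = 0.
Proof. rewrite sum_n_const. apply Rmult_0_r. Qed.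



Lemma col_conv l : seq_conv (fun k => x1 k l).
Proof.
  exists 0. intros eps He. destruct (small_inv eps He) as [N HN]. exists N. intros k Hk.
  unfold x1. rewrite Cm0, Cmod_R, Rabs_pos_eq.
  - now apply HN.
  - left. apply Rinv_0_lt_compat, lt_0_INR; lia.
Qed.

Lemma row_conv k : seq_conv (fun l => x1 k l).
Proof.
  exists (x1 k 0%nat). intros eps He. exists 0%nat. intros n _.
  unfold x1. rewrite Cmm, Cmod_R, Rabs_R0. exact He.
Qed.

Lemma x1_H th : H_space th x1.
Proof.
  split.
  - exists 0. intros m n.
    rewrite (sum_n_ext _ (fun _ => 0)).
    + rewrite sum_zero. lra.
    + intros k. rewrite (sum_n_ext _ (fun _ => 0)). apply sum_zero. intros l. apply x1_term.
  - destruct th; simpl.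
    + apply x1_pconv.
    + split; [|apply x1_pconv]. exists 1. intros k l. unfold x1. rewrite Cmod_R, Rabs_pos_eq.
      * rewrite <- Rinv_1. apply Rinv_le_contravar; [lra|]. rewrite S_INR. pose proof (pos_INR k). lra.
      * left. apply Rinv_0_lt_compat, lt_0_INR; lia.
    + split; [apply x1_pconv|split; [apply row_conv|apply col_conv]].
Qed.

Lemma x1_notL : ~ L_u x1.
Proof.
  intros [M HM]. destruct (big_nat M) as [n Hn]. specialize (HM 0%nat n).
  rewrite sum_O in HM.
  rewrite (sum_n_ext _ (fun _ => 1)) in HM.
  - rewrite sum_n_const, S_INR in HM. lra.
  - intros l. unfold x1. rewrite Cmod_R. simpl. rewrite Rinv_1. apply Rabs_R1.
Qed.

Definition b (k : nat) : R := / (INR (S k) * INR (S k)).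
Definition a2 (k l : nat) : R := if Nat.eq_dec k l then b k else 0.
Definition x2 : dseq := fun k l => RtoC (a2 k l).

Lemma b_pos k : 0 < b k.
Proof. unfold b. apply Rinv_0_lt_compat. pose proof (lt_0_INR (S k) ltac:(lia)). nra. Qed.

Lemma inner_eq k n : sum_f_R0 (fun l => Cmod (x2 k l)) n = if le_dec k n then b k else 0.
Proof.
  assert (Hc : forall l, Cmod (x2 k l) = a2 k l).
  { intros l. unfold x2, a2. rewrite Cmod_R. destruct (Nat.eq_dec k l).
    - apply Rabs_pos_eq. left; apply b_pos.
    - apply Rabs_R0. }
  induction n as [|n IH]; simpl.
  - rewrite Hc. unfold a2. destruct (Nat.eq_dec k 0); destruct (le_dec k 0); try lia; auto.
  - rewrite IH, Hc. unfold a2. destruct (Nat.eq_dec k (S n)); destruct (le_dec k n);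
      destruct (le_dec k (S n)); try lia; lra.
Qed.

Lemma b_sum m : sum_f_R0 b m <= 2 - / INR (S m).
Proof.
  induction m as [|m IH].
  - unfold b. simpl. lra.
  - change (sum_f_R0 b (S m)) with (sum_f_R0 b m + b (S m)). unfold b at 2.
    replace (INR (S (S m))) with (INR m + 1 + 1) by (rewrite !S_INR; ring).
    replace (INR (S m)) with (INR m + 1) in * by (rewrite !S_INR; ring).
    set (t := INR m) in *. assert (0 <= t) by apply pos_INR.
    assert (Hu : / (t + 1) * (t + 1) = 1) by (field; lra).
    assert (Hv : / (t + 1 + 1) * (t + 1 + 1) = 1) by (field; lra).
    assert (Hw : / ((t + 1 + 1) * (t + 1 + 1)) = / (t + 1 + 1) * / (t + 1 + 1)) by (field; lra).
    rewrite Hw.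
    assert (0 < / (t+1)) by (apply Rinv_0_lt_compat; lra).
    assert (0 < / (t+1+1)) by (apply Rinv_0_lt_compat; lra).
    set (u := / (t+1)) in *. set (v := / (t+1+1)) in *.
    assert (Huv : u - v = u * v) by (apply (Rmult_eq_reg_r ((t+1)*(t+1+1))); [nra| apply Rmult_integral_contrapositive_currified; lra]).
    assert (v <= u) by nra. assert (v*v <= u*v) by (apply Rmult_le_compat_r; lra). lra.
Qed.

Lemma x2_L : L_u x2.
Proof.
  exists 2. intros m n. rewrite sum_n_Reals.
  apply Rle_trans with (sum_f_R0 b m).
  - apply sum_Rle. intros k _. rewrite sum_n_Reals, inner_eq.
    destruct (le_dec k n); [lra|left; apply b_pos].
  - pose proof (b_sum m). assert (0 < / INR (S m)) by (apply Rinv_0_lt_compat, lt_0_INR; lia). lra.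
Qed.

Lemma x2_diag k : 1 <= Cmod (RtoC (INR ((S k) * (S k))) * Defs.Delta x2 k k).
Proof.
  unfold x2. rewrite (term_R a2). unfold a2.
  destruct (Nat.eq_dec k k); [|congruence].
  destruct (Nat.eq_dec (S k) k); [lia|].
  destruct (Nat.eq_dec k (S k)); [lia|].
  destruct (Nat.eq_dec (S k) (S k)); [|congruence].
  pose proof (b_pos (S k)).
  rewrite mult_INR. unfold b at 1.
  assert (0 < INR (S k)) by (apply lt_0_INR; lia).
  replace (INR (S k) * INR (S k) * (/ (INR (S k) * INR (S k)) - 0 - 0 + b (S k)))
    with (1 + INR (S k) * INR (S k) * b (S k)) by (field; lra).
  rewrite Rabs_pos_eq; nra.
Qed.

Lemma x2_notH th : ~ H_space th x2.
Proof.
  intros [[M HM] _]. destruct (big_nat M) as [m Hm]. specialize (HM m m).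
  rewrite sum_n_Reals in HM.
  assert (sum_f_R0 (fun _ => 1) m <= sum_f_R0 (fun k => sum_n (fun l => Cmod (RtoC (INR ((S k) * (S l))) * Defs.Delta x2 k l)) m) m).
  { apply sum_Rle. intros k Hk. rewrite sum_n_Reals.
    eapply Rle_trans; [apply (x2_diag k)|].
    apply (sumf_le_term (fun l => Cmod (RtoC (INR ((S k) * (S l))) * Defs.Delta x2 k l))); auto.
    intros; apply Cmod_ge_0. }
  rewrite sum_cte, S_INR in H. lra.
Qed.

Theorem theorem2p4 (th : mode) :
  (exists x : dseq, H_space th x /\ ~ L_u x) /\
  (exists x : dseq, L_u x /\ ~ H_space th x).
Proof.
  split.
  - exists x1. split; [apply x1_H|apply x1_notL].
  - exists x2. split; [apply x2_L|apply x2_notH].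
Qed.
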